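(* Let $E$ be a congruence on $\overline{\boldsymbol{T}(X_1,\ldots,X_n)}$, $F$ a congruence on $\overline{\boldsymbol{T}(Y_1,\ldots,Y_m)}$, $V:=\boldsymbol{V}(E)$, $W:=\boldsymbol{V}(F)$, $\pi_E$ the natural surjection onto $\overline{\boldsymbol{T}(X_1,\ldots,X_n)}/E$, and $\psi:\overline{\boldsymbol{T}(X_1,\ldots,X_n)}/E\to\overline{\boldsymbol{T}(Y_1,\ldots,Y_m)}/F$ a $\boldsymbol{T}$-algebra homomorphism; let $\theta:W\to\boldsymbol{T}^n$, $y\mapsto(\psi(\pi_E(X_1))(y),\ldots,\psi(\pi_E(X_n))(y))$. If $\psi$ is an isomorphism, then $V$ and $W$ are homeomorphic via $\theta$.
   Context: $\boldsymbol{T}=\mathbb{R}\cup\{-\infty\}$ with $a\oplus b=\max\{a,b\}$, $a\odot b=a+b$. $\overline{\boldsymbol{T}[X_1,\ldots,X_n]}$ is the tropical polynomial semiring modulo identifying polynomials defining the same function $\boldsymbol{T}^n\to\boldsymbol{T}$; it is cancellative and $\overline{\boldsymbol{T}(X_1,\ldots,X_n)}$ is its semifield of fractions ($X_i$ denoting the image of the variable). Each element defines a function $\mathbb{R}^n\to\boldsymbol{T}$ (quotients evaluated as differences). $\boldsymbol{T}$-algebras are semirings with a semiring homomorphism from $\boldsymbol{T}$; homomorphisms are compatible semiring homomorphisms, isomorphisms the bijective ones. A congruence is an equivalence relation compatible with both operations. $\boldsymbol{V}(E)=\{x\in\mathbb{R}^n\mid f(x)=g(x)\ \forall(f,g)\in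 E\}$; an element of the quotient by $F$ is evaluated at points of $\boldsymbol{V}(F)$ via any representative (well defined). Subsets of $\mathbb{R}^n$, $\mathbb{R}^m$ carry the Euclidean topology. *)

(* Defs.v *)
From HB Require Import structures.
From mathcomp Require Import all_boot all_order all_algebra.
From mathcomp Require Import all_classical all_reals all_analysis.
Set Implicit Arguments. Unset Strict Implicit. Unset Printing Implicit Defensive.
Import Order.TTheory GRing.Theory Num.Theory.
Import numFieldNormedType.Exports.
Local Open Scope classical_set_scope.
Local Open Scope ring_scope.

(* T = R ∪ {-oo} is modelled inside \bar R (the value +oo never occurs). *)

(* A tropical polynomial in n variables with real (finite) coefficients:
   a finite list of monomials c ⊙ X^a (monomials with coefficient -oo are
   simply omitted; the empty list is the -oo polynomial). *)
Definition tpoly (R : realType) (n : nat) := seq (R * ('I_n -> nat)).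

Definition peval (R : realType) (n : nat) (p : tpoly R n) (x : 'rV[R]_n) : \bar R :=
  \big[maxe/-oo%E]_(t <- p) (t.1 + \sum_(i < n) (t.2 i)%:R * x ord0 i)%:E.

(* Elements of the semifield  \overline{T(X_1..X_n)}  are identified with the
   functions R^n -> T they define: quotients p/q (q <> -oo) evaluated as
   differences p(x) - q(x). *)
Definition is_tfrac (R : realType) (n : nat) (h : 'rV[R]_n -> \bar R) : Prop :=
  exists (p q : tpoly R n), q <> [::] /\ forall x, h x = (peval p x - peval q x)%E.

Definition toplus (R : realType) (n : nat) (f g : 'rV[R]_n -> \bar R) :=
  fun x => maxe (f x) (g x).
Definition totimes (R : realType) (n : nat) (f g : 'rV[R]_n -> \bar R) :=
  fun x => (f x + g x)%E.
Definition tconst (R : realType) (n : nat) (c : \bar R) : 'rV[R]_n -> \bar R :=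
  fun _ => c.
Definition tvar (R : realType) (n : nat) (i : 'I_n) : 'rV[R]_n -> \bar R :=
  fun x => (x ord0 i)%:E.

Definition is_T (R : realType) (c : \bar R) : Prop := c <> +oo%E.

Definition tcongruence (R : realType) (n : nat)
  (E : ('rV[R]_n -> \bar R) -> ('rV[R]_n -> \bar R) -> Prop) : Prop :=
  (forall f g, E f g -> is_tfrac f /\ is_tfrac g) /\
  [/\ (forall f, is_tfrac f -> E f f),
      (forall f g, E f g -> E g f),
      (forall f g h, E f g -> E g h -> E f h),
      (forall f g f' g', E f g -> E f' g' -> E (toplus f f') (toplus g g')) &
      (forall f g f' g', E f g -> E f' g' -> E (totimes f f') (totimes g g'))].

Definition tvariety (R : realType) (n : nat)
  (E : ('rV[R]_n -> \bar R) -> ('rV[R]_n -> \bar R) -> Prop) : set 'rV[R]_n :=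
  [set x | forall f g, E f g -> f x = g x].

(* A T-algebra homomorphism  psi : T(X)/E -> T(Y)/F, given by a map Psi on
   representatives: psi (pi_E f) = pi_F (Psi f). *)
Definition tquot_hom (R : realType) (n m : nat)
  (E : ('rV[R]_n -> \bar R) -> ('rV[R]_n -> \bar R) -> Prop)
  (F : ('rV[R]_m -> \bar R) -> ('rV[R]_m -> \bar R) -> Prop)
  (Psi : ('rV[R]_n -> \bar R) -> ('rV[R]_m -> \bar R)) : Prop :=
  [/\ (forall f, is_tfrac f -> is_tfrac (Psi f)),
      (forall f g, E f g -> F (Psi f) (Psi g)),
      (forall f g, is_tfrac f -> is_tfrac g ->
         F (Psi (toplus f g)) (toplus (Psi f) (Psi g))),
      (forall f g, is_tfrac f -> is_tfrac g ->
         F (Psi (totimes f g)) (totimes (Psi f) (Psi g))) &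
      (forall c, is_T c -> F (Psi (@tconst R n c)) (@tconst R m c))].

Definition tquot_iso (R : realType) (n m : nat)
  (E : ('rV[R]_n -> \bar R) -> ('rV[R]_n -> \bar R) -> Prop)
  (F : ('rV[R]_m -> \bar R) -> ('rV[R]_m -> \bar R) -> Prop)
  (Psi : ('rV[R]_n -> \bar R) -> ('rV[R]_m -> \bar R)) : Prop :=
  [/\ tquot_hom E F Psi,
      (forall f g, is_tfrac f -> is_tfrac g -> F (Psi f) (Psi g) -> E f g) &
      (forall h, is_tfrac h -> exists2 f, is_tfrac f & F (Psi f) h)].

(* theta : W -> T^n, y |-> (psi(pi_E X_1)(y), ..., psi(pi_E X_n)(y)),
   stored as the vector of finite parts (finiteness is asserted separately). *)
Definition ttheta (R : realType) (n m : nat)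
  (Psi : ('rV[R]_n -> \bar R) -> ('rV[R]_m -> \bar R)) (y : 'rV[R]_m) : 'rV[R]_n :=
  \row_(i < n) fine (Psi (tvar i) y).

Definition homeo_via (R : realType) (m n : nat) (A : set 'rV[R]_m) (B : set 'rV[R]_n)
  (f : 'rV[R]_m -> 'rV[R]_n) : Prop :=
  exists g : 'rV[R]_n -> 'rV[R]_m,
    [/\ (forall y, A y -> B (f y) /\ g (f y) = y),
        (forall x, B x -> A (g x) /\ f (g x) = x),
        {within A, continuous f} &
        {within B, continuous g}].

(* Main.v *)
Require Import Defs.
From HB Require Import structures.
From mathcomp Require Import all_boot all_order all_algebra.
From mathcomp Require Import all_classical all_reals all_analysis.
From mathcomp Require Import ring lra.
Import Order.TTheory GRing.Theory Num.Theory.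
Import numFieldNormedType.Exports.
Local Open Scope classical_set_scope.
Local Open Scope ring_scope.
Set Implicit Arguments. Unset Strict Implicit. Unset Printing Implicit Defensive.
Definition mval (R : realType) n (t : R * ('I_n -> nat)) (x : 'rV[R]_n) : R :=
  t.1 + \sum_(i < n) (t.2 i)%:R * x ord0 i.

Lemma pevalE (R : realType) n (p : tpoly R n) x :
  peval p x = \big[maxe/-oo%E]_(t <- p) (mval t x)%:E.
Proof. by []. Qed.

Lemma peval_nil (R : realType) n (x : 'rV[R]_n) : peval [::] x = -oo%E.
Proof. by rewrite pevalE big_nil. Qed.

Lemma peval_cons (R : realType) n t (p : tpoly R n) x :
  peval (t :: p) x = maxe (mval t x)%:E (peval p x).
Proof. by rewrite !pevalE big_cons. Qed.

Lemma peval1 (R : realType) n t (x : 'rV[R]_n) : peval [:: t] x = (mval t x)%:E.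
Proof. by rewrite peval_cons peval_nil maxeNy. Qed.

Lemma peval_cat (R : realType) n (p q : tpoly R n) x :
  peval (p ++ q) x = maxe (peval p x) (peval q x).
Proof. by rewrite !pevalE big_cat. Qed.

Lemma peval_fin (R : realType) n t (p : tpoly R n) x :
  peval (t :: p) x \is a fin_num.
Proof.
elim: p t => [|s p IH] t; first by rewrite peval1.
rewrite peval_cons; move: (IH s); set v := peval _ x.
case: v => // r _; by rewrite -EFin_max.
Qed.

Lemma peval_ninf (R : realType) n (p : tpoly R n) x :
  peval p x = -oo%E \/ peval p x \is a fin_num.
Proof. case: p => [|t p]; [left; exact: peval_nil | right; exact: peval_fin]. Qed.

Lemma peval_neq_pinf (R : realType) n (p : tpoly R n) x : peval p x <> +oo%E.
Proof. by case: (peval_ninf p x) => [->|]// /[swap] ->. Qed.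

Definition pmul (R : realType) n (p q : tpoly R n) : tpoly R n :=
  [seq (s.1 + t.1, fun i => (s.2 i + t.2 i)%N) | s <- p, t <- q].

Lemma mval_mul (R : realType) n (s t : R * ('I_n -> nat)) x :
  mval (s.1 + t.1, fun i => (s.2 i + t.2 i)%N) x = mval s x + mval t x.
Proof.
rewrite /mval /=.
under eq_bigr do rewrite natrD mulrDl.
rewrite big_split /=; lra.
Qed.

Lemma bigmaxe_addl (R : realType) (I : Type) (s : seq I) (a : R) (F : I -> \bar R) :
  \big[maxe/-oo%E]_(t <- s) (a%:E + F t)%E = (a%:E + \big[maxe/-oo%E]_(t <- s) F t)%E.
Proof.
elim: s => [|u s IH]; first by rewrite !big_nil addeNy.
by rewrite !big_cons IH adde_maxr.
Qed.

Lemma peval_pmul (R : realType) n (p q : tpoly R n) x :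
  peval (pmul p q) x = (peval p x + peval q x)%E.
Proof.
rewrite /pmul !pevalE big_allpairs_dep.
elim: p => [|s p IH]; first by rewrite !big_nil.
rewrite !big_cons IH adde_maxl; congr maxe.
under eq_bigr do rewrite mval_mul EFinD.
by rewrite bigmaxe_addl.
Qed.

Lemma q0E (R : realType) n (x : 'rV[R]_n) : peval [:: (0 : R, fun _ : 'I_n => 0%N)] x = 0%E.
Proof.
rewrite peval1 /mval /= big1 ?addr0 // => i _; by rewrite mul0r.
Qed.

Lemma tfrac_peval (R : realType) n (p : tpoly R n) : is_tfrac (peval p).
Proof.
exists p, [:: (0 : R, fun _ : 'I_n => 0%N)]; split => // x.
by rewrite q0E sube0.
Qed.

Lemma tfracP (R : realType) n (h : 'rV[R]_n -> \bar R) : is_tfrac h ->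
  exists p t q, forall x, h x = (peval p x - peval (t :: q) x)%E.
Proof. by case=> p [[|t q] [//]] H; exists p, t, q. Qed.

Lemma tfrac_npinf (R : realType) n (h : 'rV[R]_n -> \bar R) x : is_tfrac h -> h x <> +oo%E.
Proof.
move=> /tfracP [p [t [q ->]]].
move: (peval_fin t q x) => /fineK <-.
by case: (peval_ninf p x) => [->|/fineK <-].
Qed.

Lemma tfrac_const (R : realType) n (c : \bar R) : is_T c -> is_tfrac (@tconst R n c).
Proof.
case: c => [r| |] // _.
- exists [:: (r, fun _ : 'I_n => 0%N)], [:: (0 : R, fun _ : 'I_n => 0%N)]; split => // x.
  rewrite q0E sube0 peval1 /mval /= big1 ?addr0 // => i _; by rewrite mul0r.
- exists [::], [:: (0 : R, fun _ : 'I_n => 0%N)]; split => // x.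
  by rewrite q0E peval_nil.
Qed.

Definition dlt n (i : 'I_n) : 'I_n -> nat := fun j => (j == i).

Lemma mval_dlt (R : realType) n (i : 'I_n) (x : 'rV[R]_n) :
  mval (0, dlt i) x = x ord0 i.
Proof.
rewrite /mval /= (bigD1 i) //= big1 ?addr0 /dlt ?eqxx ?mul1r ?add0r // => j /negbTE ->.
by rewrite mul0r.
Qed.

Lemma tfrac_var (R : realType) n (i : 'I_n) : is_tfrac (@tvar R n i).
Proof.
exists [:: (0, dlt i)], [:: (0 : R, fun _ : 'I_n => 0%N)]; split => // x.
by rewrite q0E sube0 peval1 mval_dlt.
Qed.

Definition tvinv (R : realType) n (i : 'I_n) : 'rV[R]_n -> \bar R :=
  fun x => (- x ord0 i)%:E.

Lemma tfrac_vinv (R : realType) n (i : 'I_n) : is_tfrac (@tvinv R n i).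
Proof.
exists [:: (0 : R, fun _ : 'I_n => 0%N)], [:: (0, dlt i)]; split => // x.
by rewrite q0E peval1 mval_dlt /tvinv sub0e.
Qed.

Lemma tfrac_times (R : realType) n (f g : 'rV[R]_n -> \bar R) :
  is_tfrac f -> is_tfrac g -> is_tfrac (totimes f g).
Proof.
move=> /tfracP [p [t [q Hf]]] /tfracP [p' [t' [q' Hg]]].
exists (pmul p p'), (pmul (t :: q) (t' :: q')); split => // x.
rewrite /totimes Hf Hg !peval_pmul.
move: (peval_fin t q x) (peval_fin t' q' x) => /fineK <- /fineK <-.
case: (peval_ninf p x) => [->|/fineK <-]; case: (peval_ninf p' x) => [->|/fineK <-] //=.
rewrite /= -!EFinD; congr EFin; lra.
Qed.

Lemma maxe_aux (R : realType) (a b c d : R) :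
  maxe (a%:E + (- b)%:E)%E (c%:E + (- d)%:E)%E =
  (maxe (a%:E + d%:E) (c%:E + b%:E) + (- (b + d))%:E)%E.
Proof.
rewrite -!EFinD -!EFin_max -EFinD; congr EFin; rewrite addr_maxl; congr Num.max; lra.
Qed.

Lemma tfrac_plus (R : realType) n (f g : 'rV[R]_n -> \bar R) :
  is_tfrac f -> is_tfrac g -> is_tfrac (toplus f g).
Proof.
move=> /tfracP [p [t [q Hf]]] /tfracP [p' [t' [q' Hg]]].
exists (pmul p (t' :: q') ++ pmul p' (t :: q)), (pmul (t :: q) (t' :: q')); split => // x.
rewrite /toplus Hf Hg peval_cat !peval_pmul.
move: (peval_fin t q x) (peval_fin t' q' x) => /fineK <- /fineK <-.
case: (peval_ninf p x) => [->|/fineK <-]; case: (peval_ninf p' x) => [->|/fineK <-] //=.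
- by rewrite !addNye !maxNye -!EFinD; congr EFin; lra.
- by rewrite !addNye !maxeNy -!EFinD; congr EFin; lra.
- exact: maxe_aux.
Qed.

Lemma peval_ind (R : realType) n (P : ('rV[R]_n -> \bar R) -> Prop) :
  (forall c, is_T c -> P (tconst c)) ->
  (forall i, P (tvar i)) ->
  (forall f g, is_tfrac f -> is_tfrac g -> P f -> P g -> P (toplus f g)) ->
  (forall f g, is_tfrac f -> is_tfrac g -> P f -> P g -> P (totimes f g)) ->
  forall p, P (peval p).
Proof.
move=> Pc Pv Pp Pt.
have Pm : forall k c a, (\sum_(j < n) a j)%N = k -> P (peval [:: (c, a)]).
  elim=> [|k IH] c a Ha.
    have -> : peval [:: (c, a)] = tconst c%:E.
      apply/funext => x; rewrite peval1 /tconst /mval /= big1 ?addr0 // => j _.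
      move/eqP: Ha; rewrite sum_nat_eq0 => /forallP /(_ j) /implyP /(_ isT) /eqP ->.
      by rewrite mul0r.
    exact: Pc.
  have [i ai] : exists i, (0 < a i)%N.
    apply/existsP; apply: contraT; rewrite negb_exists => /forallP H.
    move: Ha; rewrite big1 // => j _; by move: (H j); rewrite lt0n negbK => /eqP.
  pose a' := fun j => if j == i then (a i).-1 else a j.
  have Ea : a = fun j => (a' j + dlt i j)%N.
    apply/funext => j; rewrite /a' /dlt; case: eqP => [->|_]; last by rewrite addn0.
    by rewrite addn1 prednK.
  have -> : peval [:: (c, a)] = totimes (peval [:: (c, a')]) (tvar i).
    apply/funext => x; rewrite /totimes /tvar !peval1 -EFinD -(mval_dlt i x) -mval_mul /=.
    by rewrite addr0 -Ea.
  apply: Pt; [exact: tfrac_peval|exact: tfrac_var| |exact: Pv].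
  apply: (IH c a'); move: Ha; rewrite (bigD1 i) //= (bigD1 i (F := a')) //=.
  have -> : (\sum_(j < n | j != i) a' j = \sum_(j < n | j != i) a j)%N.
    by apply: eq_bigr => j /negbTE ji; rewrite /a' ji.
  rewrite /a' eqxx.
  move=> H; apply/eqP; rewrite -eqSS -H; apply/eqP; rewrite -addSn prednK //.
elim=> [|t p IH].
  have -> : peval (@nil (R * ('I_n -> nat))) = tconst -oo%E.
    by apply/funext => x; rewrite peval_nil.
  exact: Pc.
have -> : peval (t :: p) = toplus (peval [:: t]) (peval p).
  by apply/funext => x; rewrite /toplus peval_cons peval1.
apply: Pp => //; try exact: tfrac_peval.
case: t => c a; exact: (Pm _ c a erefl).
Qed.

Lemma row_cont (R : realType) m n (G : 'rV[R]_m -> 'rV[R]_n) :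
  (forall j, continuous (fun y => G y ord0 j)) -> continuous G.
Proof.
move=> cG y A /nbhs_ballP[e e0 eA].
have H j : \forall z \near y, ball (G y ord0 j) e (G z ord0 j).
  apply: (cG j y); exact: nbhsx_ballx.
have H2 := filter_forall _ H.
suff: \forall z \near y, A (G z) by [].
near=> z; apply: eA; split => //.
have : forall j, ball (G y ord0 j) e (G z ord0 j) by near: z; exact: H2.
move=> Hz i j; rewrite (ord1 i); exact: Hz.
Unshelve. all: by end_near.
Qed.

Lemma sum_cont (R : realType) (T : topologicalType) (I : Type) (r : seq I)
  (F : I -> T -> R) : (forall i, continuous (F i)) ->
  continuous (fun x => \sum_(i <- r) F i x).
Proof.
move=> cF; elim: r => [|i r IH].
  have -> : (fun x => \sum_(i <- [::]) F i x) = fun=> 0 by apply/funext => x; rewrite big_nil.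
  move=> x; exact: cvg_cst.
have -> : (fun x => \sum_(j <- i :: r) F j x) = (F i) + (fun x => \sum_(j <- r) F j x).
  by apply/funext => x; rewrite big_cons.
move=> x; apply: cvgD; [exact: cF|exact: IH].
Qed.

Lemma mval_cont (R : realType) n (t : R * ('I_n -> nat)) : continuous (mval t).
Proof.
have -> : mval t = (fun=> t.1) + (fun x => \sum_(i < n) (t.2 i)%:R * x ord0 i).
  by apply/funext.
move=> x; apply: continuousD; first exact: cst_continuous.
suff Hs : continuous (fun x : 'rV[R]_n => \sum_(i < n) (t.2 i)%:R * x ord0 i) by exact: Hs.
apply: sum_cont => i y.
apply: (continuousM (s := fun=> (t.2 i)%:R) (t := fun x : 'rV[R]_n => x ord0 i)); first exact: cst_continuous.
exact: coord_continuous.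
Qed.

Lemma peval_cont (R : realType) n t (p : tpoly R n) :
  continuous (fun x => fine (peval (t :: p) x)).
Proof.
elim: p t => [|s p IH] t.
  have -> : (fun x => fine (peval [:: t] x)) = mval t.
    by apply/funext => x; rewrite peval1.
  exact: mval_cont.
have -> : (fun x => fine (peval [:: t, s & p] x)) =
    (mval t) \max (fun x => fine (peval (s :: p) x)).
  apply/funext => x; rewrite peval_cons -(fineK (peval_fin s p x)) -EFin_max /=.
  by [].
apply: max_fun_continuous; [exact: mval_cont|exact: IH].
Qed.

Lemma tfrac_cont (R : realType) n (h : 'rV[R]_n -> \bar R) (A : set 'rV[R]_n) :
  is_tfrac h -> (forall y, A y -> h y \is a fin_num) ->
  exists G : 'rV[R]_n -> R, continuous G /\ forall y, A y -> G y = fine (h y).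
Proof.
move=> /tfracP [[|s p] [t [q Hh]]] Hfin.
  exists (fun=> 0); split; first exact: cst_continuous.
  by move=> y /Hfin; rewrite Hh peval_nil.
exists ((fun x => fine (peval (s :: p) x)) - (fun x => fine (peval (t :: q) x))); split.
  move=> x; apply: continuousB; [exact: peval_cont|exact: peval_cont].
move=> y _; rewrite Hh -(fineK (peval_fin s p y)) -(fineK (peval_fin t q y)) /=.
by [].
Qed.

Lemma row_within (R : realType) m n (H : 'I_n -> 'rV[R]_m -> R) (A : set 'rV[R]_m) :
  (forall i, exists G : 'rV[R]_m -> R, continuous G /\ forall y, A y -> G y = H i y) ->
  {within A, continuous (fun y => \row_i H i y)}.
Proof.
move=> HG; have [G HG'] := choice HG.
apply: (@subspace_eq_continuous _ _ _ (fun y => \row_i G i y)).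
  move=> y; rewrite inE => Ay; apply/rowP => i; rewrite !mxE.
  by case: (HG' i) => _ ->.
apply: continuous_subspaceT; apply: row_cont => j y.
have -> : (fun y => (\row_i G i y) ord0 j) = G j by apply/funext => z; rewrite mxE.
by case: (HG' j).
Qed.

Lemma sum0_fin (R : realType) (a b : \bar R) :
  (a + b)%E = 0%E -> a <> +oo%E -> b <> +oo%E -> a \is a fin_num.
Proof. by case: a => [r| |]; case: b. Qed.

Lemma times_inv0 (R : realType) n (i : 'I_n) :
  totimes (@tvar R n i) (tvinv i) = tconst 0%E.
Proof. by apply/funext => x; rewrite /totimes /tvar /tvinv /tconst -EFinD subrr. Qed.

Arguments tfrac_var {R n} i.
Arguments tfrac_vinv {R n} i.
Arguments tfrac_const {R n} c.
Arguments times_inv0 {R n} i.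

Unset Implicit Arguments.

Theorem corollary3p20 (R : realType) (n m : nat)
  (E : ('rV[R]_n -> \bar R) -> ('rV[R]_n -> \bar R) -> Prop)
  (F : ('rV[R]_m -> \bar R) -> ('rV[R]_m -> \bar R) -> Prop)
  (Psi : ('rV[R]_n -> \bar R) -> ('rV[R]_m -> \bar R)) :
  tcongruence E -> tcongruence F -> tquot_iso E F Psi ->
  (forall y, tvariety F y -> forall i : 'I_n, Psi (tvar i) y \is a fin_num) /\
  homeo_via (tvariety F) (tvariety E) (ttheta Psi).
Proof.
move=> [EF [Erefl Esym Etrans Eplus Etimes]] [FF [Frefl Fsym Ftrans Fplus Ftimes]].
move=> [[Ptf Pcong Pplus Ptimes Pconst] Pinj Psurj].
have T0 : is_T (0%E : \bar R) by [].
have var_fin : forall y, tvariety F y -> forall i : 'I_n, Psi (tvar i) y \is a fin_num.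
  move=> y Wy i.
  have H1 := Wy _ _ (Ptimes _ _ (tfrac_var i) (tfrac_vinv i)).
  have H2 := Wy _ _ (Pconst _ T0).
  rewrite times_inv0 H2 /totimes /tconst in H1.
  apply: (sum0_fin (esym H1)); apply: tfrac_npinf; apply: Ptf.
    exact: tfrac_var.
  exact: tfrac_vinv.
have L2 : forall y, tvariety F y -> forall f, is_tfrac f -> Psi f y = f (ttheta Psi y).
  move=> y Wy.
  have Lp : forall p : tpoly R n, Psi (peval p) y = peval p (ttheta Psi y).
    apply: (peval_ind (P := fun h => Psi h y = h (ttheta Psi y))).
    - by move=> c Tc; rewrite (Wy _ _ (Pconst _ Tc)).
    - by move=> i; rewrite /tvar mxE fineK //; exact: var_fin.
    - move=> f g tf tg Hf Hg; rewrite (Wy _ _ (Pplus _ _ tf tg)) /toplus.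
      by rewrite Hf Hg.
    - move=> f g tf tg Hf Hg; rewrite (Wy _ _ (Ptimes _ _ tf tg)) /totimes.
      by rewrite Hf Hg.
  move=> f tf; have := tf => /tfracP [p [t [q Hf]]].
  have ef : peval p = totimes f (peval (t :: q)).
    by apply/funext => x; rewrite /totimes Hf subeK // peval_fin.
  have := Lp p; rewrite {1}ef (Wy _ _ (Ptimes _ _ tf (tfrac_peval _))) /totimes Lp.
  move=> H; rewrite Hf -H addeK //; exact: peval_fin.
have Hc1 : forall j : 'I_m, exists f, is_tfrac f /\ F (Psi f) (tvar j).
  move=> j; have [f tf Hf] := Psurj _ (tfrac_var j); by exists f.
have [fs Hfs] := choice Hc1.
have Hc2 : forall j : 'I_m, exists f, is_tfrac f /\ F (Psi f) (tvinv j).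
  move=> j; have [f tf Hf] := Psurj _ (tfrac_vinv j); by exists f.
have [fsi Hfsi] := choice Hc2.
pose g := fun x : 'rV[R]_n => \row_j fine (fs j x).
have fs_fin : forall x, tvariety E x -> forall j, fs j x \is a fin_num.
  move=> x Vx j; have [tf Hf] := Hfs j; have [tfi Hfi] := Hfsi j.
  have HE : E (totimes (fs j) (fsi j)) (tconst 0%E).
    apply: Pinj; [exact: tfrac_times|exact: tfrac_const|].
    apply: (Ftrans _ _ _ (Ptimes _ _ tf tfi)).
    apply: (Ftrans _ _ _ (Ftimes _ _ _ _ Hf Hfi)).
    rewrite times_inv0; exact: Fsym (Pconst _ T0).
  have := Vx _ _ HE; rewrite /totimes /tconst => H.
  apply: (sum0_fin H); exact: tfrac_npinf.
have D : forall x, tvariety E x -> forall p : tpoly R m,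
    exists f, [/\ is_tfrac f, F (Psi f) (peval p) & f x = peval p (g x)].
  move=> x Vx; apply: (peval_ind (P := fun h =>
    exists f, [/\ is_tfrac f, F (Psi f) h & f x = h (g x)])).
  - move=> c Tc; exists (tconst c); split => //; [exact: tfrac_const|exact: Pconst].
  - move=> j; have [tf Hf] := Hfs j; exists (fs j); split => //.
    by rewrite /tvar mxE fineK //; exact: fs_fin.
  - move=> h1 h2 th1 th2 [f1 [tf1 Hf1 e1]] [f2 [tf2 Hf2 e2]].
    exists (toplus f1 f2); split; first exact: tfrac_plus.
      exact: (Ftrans _ _ _ (Pplus _ _ tf1 tf2) (Fplus _ _ _ _ Hf1 Hf2)).
    by rewrite /toplus e1 e2.
  - move=> h1 h2 th1 th2 [f1 [tf1 Hf1 e1]] [f2 [tf2 Hf2 e2]].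
    exists (totimes f1 f2); split; first exact: tfrac_times.
      exact: (Ftrans _ _ _ (Ptimes _ _ tf1 tf2) (Ftimes _ _ _ _ Hf1 Hf2)).
    by rewrite /totimes e1 e2.
have Dh : forall x, tvariety E x -> forall h, is_tfrac h -> forall f, is_tfrac f ->
    F (Psi f) h -> f x = h (g x).
  move=> x Vx h th f tf Hfh; have := th => /tfracP [p [t [q Hh]]].
  have [fp [tfp Hfp ep]] := D x Vx p.
  have [fq [tfq Hfq eq]] := D x Vx (t :: q).
  have eh : peval p = totimes h (peval (t :: q)).
    by apply/funext => z; rewrite /totimes Hh subeK // peval_fin.
  have HE : E (totimes f fq) fp.
    apply: Pinj; [exact: tfrac_times|exact: tfp|].
    apply: (Ftrans _ _ _ (Ptimes _ _ tf tfq)).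
    apply: (Ftrans _ _ _ (Ftimes _ _ _ _ Hfh Hfq)).
    rewrite -eh; exact: Fsym.
  have := Vx _ _ HE; rewrite /totimes eq ep => H.
  by rewrite Hh -H addeK // peval_fin.
split => //.
exists g; split.
- move=> y Wy; split.
    move=> f f' Eff'; have [tf tf'] := EF _ _ Eff'.
    rewrite -(L2 y Wy f tf) -(L2 y Wy f' tf'); exact: Wy _ _ (Pcong _ _ Eff').
  apply/rowP => j; rewrite mxE; have [tf Hf] := Hfs j.
  by rewrite -(L2 y Wy _ tf) (Wy _ _ Hf).
- move=> x Vx; split.
    move=> h k Fhk; have [th tk] := FF _ _ Fhk.
    have [f tf Hf] := Psurj h th; have [f' tf' Hf'] := Psurj k tk.
    have Eff' : E f f'.
      apply: Pinj => //; apply: (Ftrans _ _ _ Hf); apply: (Ftrans _ _ _ Fhk).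
      exact: Fsym.
    rewrite -(Dh x Vx h th f tf Hf) -(Dh x Vx k tk f' tf' Hf'); exact: Vx _ _ Eff'.
  apply/rowP => i; rewrite mxE.
  have tPi : is_tfrac (Psi (tvar i)) by apply: Ptf; exact: tfrac_var.
  by rewrite -(Dh x Vx _ tPi _ (tfrac_var i) (Frefl _ tPi)).
- apply: row_within => i; apply: tfrac_cont.
    apply: Ptf; exact: tfrac_var.
  by move=> y Wy; exact: var_fin.
- apply: row_within => j; apply: tfrac_cont.
    by have [] := Hfs j.
  by move=> x Vx; exact: fs_fin.
Qed.
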